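(* Let $p$ be a prime and $F$ an arbitrary field. Let $F'|F$ be a cyclic extension of degree dividing $p-1$ and let $L|F'$ be a cyclic extension of degree $p$. If $L|F$ is galoisian, then there exists a (solvable) degree-$p$ extension $E|F$ such that $L=EF'$; any two such extensions $E$ are conjugate over $F$; and every $F$-conjugate of $E$ is contained in $L$.
   Context: A degree-$p$ extension $E$ of a field $F$ is called solvable if it is separable and the Galois group of its Galois closure over $F$ is solvable. All extensions are taken inside a fixed separable algebraic closure of $F$. *)

(* Defs.v *)
From HB Require Import structures.
From mathcomp Require Import all_boot all_order all_algebra all_fingroup all_solvable all_field.
Set Implicit Arguments. Unset Strict Implicit. Unset Printing Implicit Defensive.
Import GRing.Theory.
Local Open Scope ring_scope.

(* Ambient field Omega : a splitting field (normal, finite extension) over a base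
   field F0; all fields of the statement are subfields of Omega. *)

Definition normal_closure (F0 : fieldType) (Omega : splittingFieldType F0)
    (F E : {subfield Omega}) : {subfield Omega} :=
  (<< F + \sum_(s in ('Gal(fullv / F))%g) (s @: E) >>)%AS.

Definition solvable_ext (F0 : fieldType) (Omega : splittingFieldType F0)
    (F E : {subfield Omega}) : bool :=
  separable F E && solvable ('Gal(normal_closure F E / F))%g.

(* Main.v *)
Require Import Defs.
From HB Require Import structures.
From mathcomp Require Import all_boot all_order all_algebra all_fingroup all_solvable all_field.
Import GRing.Theory.
Local Open Scope ring_scope.
Local Open Scope group_scope.

Lemma agenv_subK (F0 : fieldType) (Omega : splittingFieldType F0)
  (K : {subfield Omega}) (V : {vspace Omega}) : (V <= K)%VS -> (agenv V <= K)%VS.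
Proof. by move/agenvS; rewrite subfield_closed. Qed.

Lemma conj_sub (F0 : fieldType) (Omega : splittingFieldType F0)
  (F E L : {subfield Omega}) s : (E <= L)%VS -> normalField F L ->
  s \in 'Gal(fullv / F) -> (s @: E <= L)%VS.
Proof.
move=> sEL nFL Gs; apply: subv_trans (limgS s sEL) _.
move/forall_inP: nFL => /(_ (gal_repr s)).
by rewrite inE kAutfE -gal_kHom ?subvf // Gs => /(_ isT)/eqP->.
Qed.

Lemma nc_sub (F0 : fieldType) (Omega : splittingFieldType F0)
  (F E L : {subfield Omega}) : (F <= L)%VS -> (E <= L)%VS -> normalField F L ->
  (normal_closure F E <= L)%VS.
Proof.
move=> sFL sEL nFL; rewrite /normal_closure /=; apply: agenv_subK.
rewrite subv_add sFL /=; apply/subv_sumP => s Gs.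
exact: (@conj_sub _ _ F E L s sEL nFL Gs).
Qed.
Lemma nc_normal (F0 : fieldType) (Omega : splittingFieldType F0)
  (F E : {subfield Omega}) : normalField F (normal_closure F E).
Proof.
apply/forall_inP => x; rewrite inE kAutfE => homFx.
rewrite eqEdim limg_dim_eq ?(eqP (AEnd_lker0 _)) ?capv0 // leqnn andbT.
rewrite /normal_closure /= aimg_agen; apply: agenvS.
rewrite limgD fixedSpace_limg; last by case/andP: homFx.
apply: addvS => //; rewrite limg_sum; apply/subv_sumP => s Gs.
rewrite -limg_comp.
have hs : kHom F fullv s by rewrite -gal_kHom ?subvf.
have /kAut_to_gal[t Gt Dt] : kAut F fullv (x \o s)%VF.
  by rewrite kAutfE; apply: comp_kHom.
rewrite (eq_in_limg (fun a _ => Dt a (memvf a))).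
exact: (sumv_sup t).
Qed.

Lemma dim_tower (F0 : fieldType) (Omega : splittingFieldType F0)
  (F K L : {subfield Omega}) : (F <= K)%VS -> (K <= L)%VS ->
  \dim_F L = (\dim_F K * \dim_K L)%N.
Proof.
move=> sFK sKL; have sFL := subv_trans sFK sKL.
apply/eqP; rewrite -(eqn_pmul2r (adim_gt0 F)).
move: (dim_sup_field sKL) (dim_sup_field sFK) (dim_sup_field sFL).
set a := \dim_K L; set b := \dim_F K; set c := \dim_F L.
move=> e1 e2 e3; rewrite -e3 e1 e2.
by rewrite mulnA (mulnC a).
Qed.
Arguments dim_tower {F0 Omega F K L}.
Arguments conj_sub {F0 Omega F E L s}.
Arguments nc_sub {F0 Omega F E L}.

Theorem lemma14 (p : nat) (F0 : fieldType) (Omega : splittingFieldType F0)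
    (F F' L : {subfield Omega}) :
  prime p ->
  (F <= F')%VS -> (F' <= L)%VS ->
  (* F'|F cyclic of degree dividing p - 1 *)
  galois F F' -> cyclic 'Gal(F' / F) -> (\dim_F F' %| p.-1)%N ->
  (* L|F' cyclic of degree p *)
  galois F' L -> cyclic 'Gal(L / F') -> \dim_F' L = p ->
  (* L|F Galois *)
  galois F L ->
  exists2 E : {subfield Omega},
    [/\ (F <= E)%VS, \dim_F E = p, solvable_ext F E & (E * F')%VS = L] &
    (forall E2 : {subfield Omega},
        (F <= E2)%VS -> \dim_F E2 = p -> (E2 * F')%VS = L ->
        exists2 s, s \in 'Gal(fullv / F) & (s @: E)%VS = E2)
    /\ (forall s, s \in 'Gal(fullv / F) -> (s @: E <= L)%VS).
Proof.
move=> pr_p sFF' sF'L galFF' cycFF' dvd_m galF'L cycN dimF'L galFL.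
have sFL := subv_trans sFF' sF'L.
have sFF'L : (F <= F' <= L)%VS by rewrite sFF'.
have nFL : normalField F L by case/and3P: galFL.
have nFF' : normalField F F' by case/and3P: galFF'.
set m := \dim_F F' in dvd_m.
have m_gt0 : (0 < m)%N by rewrite /m galois_dim // cardG_gt0.
have p_gt0 := prime_gt0 pr_p.
have cardG : #|'Gal(L / F)| = (m * p)%N by rewrite -galois_dim // (dim_tower sFF' sF'L) dimF'L.
have cardN : #|'Gal(L / F')| = p by rewrite -galois_dim.
have nsNG : 'Gal(L / F') <| 'Gal(L / F) := normalField_normal sFF'L nFF'.
have m_lt_p : (m < p)%N.
  have := dvdn_leq _ dvd_m; case: (p) pr_p => [|[|q]] //= _ /(_ isT) => H.
  by rewrite ltnS.
have co_pm : coprime p m by rewrite prime_coprime // gtnNdvd.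
have idxN : #|'Gal(L / F) : 'Gal(L / F')| = m.
  by rewrite -divgS ?normal_sub // cardG cardN mulnK.
have hallN : Hall 'Gal(L / F) 'Gal(L / F').
  by rewrite /Hall normal_sub // cardN idxN.
have /splitsP[H /complP[tiNH defG]] := SchurZassenhaus_split hallN nsNG.
have cardH : #|H| = m.
  by apply/eqP; rewrite -(eqn_pmul2l p_gt0) -{1}cardN -TI_cardMg // defG cardG mulnC eqxx.
have sHG : H \subset 'Gal(L / F) by rewrite -defG mulG_subr.
pose E : {subfield Omega} := fixedField_aspace H.
have sEL : (E <= L)%VS := fixedField_bound H.
have sFE : (F <= E)%VS by rewrite -galois_connection.
have galHE : 'Gal(L / E) = H := gal_fixedField H.
have dimE : \dim_F E = p.
  by rewrite dim_fixed_galois // -divgS // cardG cardH mulKn.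
have defEF : (E * F')%VS = L.
  pose K : {subfield Omega} := (E * F')%AS.
  have sKL : (K <= L)%VS by apply: prodv_sub.
  have sF'K : (F' <= K)%VS by apply: field_subvMl.
  have galKL : galois K L.
    by apply: (galoisS _ galFL); rewrite sKL (subv_trans sFF' sF'K).
  have trivK : 'Gal(L / K) \subset [1].
    rewrite -tiNH subsetI (galS _ sF'K) /=.
    by apply: subset_trans (galS _ (field_subvMr E F')) _; rewrite galHE.
  have d1 : \dim_K L = 1%N.
    rewrite galois_dim //; apply/eqP; rewrite eqn_leq cardG_gt0 andbT.
    by rewrite -(cards1 (1 : gal_of L)) subset_leq_card.
  apply/eqP; rewrite eqEdim sKL /= (dim_sup_field sKL) d1 mul1n leqnn //.
have sepE : separable F E.
  by apply: (separableSr sEL); case/and3P: galFL.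
have solG : solvable 'Gal(L / F).
  rewrite (series_sol nsNG) abelian_sol ?cyclic_abelian //=.
  rewrite (isog_sol (normalField_isog galFL sFF'L nFF')).
  exact/abelian_sol/cyclic_abelian.
exists E.
  split=> //; rewrite /solvable_ext sepE /=.
  have sNCL := nc_sub sFL sEL nFL.
  have sFNC : (F <= normal_closure F E)%VS.
    by rewrite /normal_closure /= (subv_trans (addvSl _ _) (sub_agenv _)).
  rewrite -(isog_sol (normalField_isog galFL _ (@nc_normal _ _ F E))) ?sFNC //.
  exact: quotient_sol.
split; last by move=> s Gs; exact: conj_sub sEL nFL Gs.
move=> E2 sFE2 dimE2 defL2.
have sE2L : (E2 <= L)%VS by rewrite -defL2 field_subvMr.
have galE2L : galois E2 L by apply: (galoisS _ galFL); rewrite sFE2 sE2L.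
have cardH2 : #|'Gal(L / E2)| = m.
  apply/eqP; rewrite -(eqn_pmul2l p_gt0) -(galois_dim galE2L) -{1}dimE2.
  by rewrite -(dim_tower sFE2 sE2L) (galois_dim galFL) cardG mulnC.
have nHN : H \subset 'N('Gal(L / F')) := subset_trans sHG (normal_norm nsNG).
have sH2 : 'Gal(L / E2) \subset 'Gal(L / F') * H by rewrite defG galS.
have co : coprime #|'Gal(L / F')| #|H| by rewrite cardN cardH.
have cardeq : #|'Gal(L / E2)| = #|H| by rewrite cardH2 cardH.
have [x Nx defH2] := SchurZassenhaus_trans_sol
  (abelian_sol (cyclic_abelian cycN)) nHN sH2 co cardeq.
have xG : x \in 'Gal(L / F) := subsetP (normal_sub nsNG) x Nx.
have homx : kHom F L x by rewrite -gal_kHom.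
have xF : (x @: F)%VS = F by apply: fixedSpace_limg; case/andP: homx.
pose E3 : {subfield Omega} := (x @: E)%AS.
have sE3L : (E3 <= L)%VS.
  by rewrite /=; apply: subv_trans (limgS _ sEL) _; rewrite limg_gal.
have sFE3 : (F <= E3)%VS by rewrite /= -xF limgS.
have galE3L : galois E3 L by apply: (galoisS _ galFL); rewrite sFE3 sE3L.
have e2 : fixedField 'Gal(L / E2) = E2 by apply/galois_fixedField.
have e3 : fixedField 'Gal(L / E3) = E3 by apply/galois_fixedField.
have hx : H :^ x = 'Gal(L / E3) by rewrite -galHE gal_conjg.
have defE2 : (E2 : {vspace Omega}) = E3 by rewrite -e2 -e3 defH2 hx.
have sFLf : (F <= L <= fullv)%VS by rewrite sFL subvf.
have [s Gs Ds] := kHom_to_gal sFLf (normalFieldf F) homx.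
exists s => //; rewrite defE2 /=; apply: eq_in_limg => a Ea.
by rewrite Ds // (subvP sEL).
Qed.
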